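(* Let $n \geq 2$ be an integer. Consider $n$ independent random variables $X_1, \dots, X_n$, each taking values in the non-negative integers and each with $\mathbb{E}[X_i] = 1$ (not necessarily identically distributed), and write $p_i(j) = P(X_i = j)$. Among all such choices of the distributions $p_1, \dots, p_n$, consider one that minimizes $P\left(\sum_{i=1}^n X_i \leq n\right)$. Then for such a minimizing choice, $p_i(j) = 0$ for all $j > n+1$ and all $i = 1, \dots, n$.
   Context: The minimization is over all $n$-tuples of probability mass functions $p_1,\dots,p_n$ on $\{0,1,2,\dots\}$ with $\sum_j j\,p_i(j) = 1$ for each $i$, the $X_i$ being independent with these laws; the minimum is attained. *)

(* Defs.v *)
From HB Require Import structures.
From mathcomp Require Import all_boot all_order all_algebra.
From mathcomp Require Import all_classical all_reals all_analysis.
Set Implicit Arguments. Unset Strict Implicit. Unset Printing Implicit Defensive.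
Import Order.TTheory GRing.Theory Num.Theory numFieldNormedType.Exports.
Local Open Scope classical_set_scope.
Local Open Scope ring_scope.

Definition admissible (R : realType) (n : nat) (p : 'I_n -> nat -> R) : Prop :=
  forall i : 'I_n,
    (forall j, 0 <= p i j) /\
    (series (p i) @ \oo --> (1 : R)) /\
    (series (fun j => j%:R * p i j) @ \oo --> (1 : R)).

(* P(X_1 + ... + X_n <= n) for independent X_i with laws p i:
   sum over all outcomes (j_1,...,j_n) with j_1+...+j_n <= n (so each j_i <= n)
   of the product of the point masses. *)
Definition prob_sum_le (R : realType) (n : nat) (p : 'I_n -> nat -> R) : R :=
  \sum_(f : {ffun 'I_n -> 'I_n.+1} | (\sum_(i < n) (f i : nat) <= n)%N)
     \prod_(i < n) p i (f i).

(* Main.v *)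
Require Import Defs.
From HB Require Import structures.
From mathcomp Require Import all_boot all_order all_algebra.
From mathcomp Require Import all_classical all_reals all_analysis.
From mathcomp Require Import ring lra zify.
Import Order.TTheory GRing.Theory Num.Theory numFieldNormedType.Exports.
Local Open Scope classical_set_scope.
Local Open Scope ring_scope.

Lemma sum_ind (R : realType) (c N : nat) (g : nat -> R) :
  \sum_(0 <= k < N) (k == c)%:R * g k = (c < N)%:R * g c.
Proof.
elim: N => [|N IH]; first by rewrite big_geq // ltn0 mul0r.
rewrite big_nat_recr //= IH.
have [->|hcN] := eqVneq c N; first by rewrite ltnn ltnSn mul0r add0r.
by rewrite ltnS [(c <= N)%N]leq_eqVlt (negbTE hcN) /= mul0r addr0.
Qed.

Lemma pos01 (R : realType) (p : nat -> R) : (forall j, 0 <= p j) ->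
  series p @ \oo --> (1:R) ->
  series (fun j => j%:R * p j) @ \oo --> (1:R) ->
  0 < p (if 0 < p 0%N then 0%N else 1%N).
Proof.
move=> h0 h1 h2; case: ifP => // hp0.
rewrite lt_def h0 andbT; apply/negP => /eqP hp1.
have hp0' : p 0%N = 0 by apply/eqP; rewrite eq_le h0 andbT leNgt hp0.
suff : (1 + 1 : R) <= 1 by lra.
apply: (ler_cvg_to (cvgD h1 h1) h2); apply: nearW => N /=.
rewrite [X in X <= _]/GRing.add /= /series /= -big_split /=; apply: ler_sum => -[|[|k]] _.
- by rewrite hp0' mul0r addr0.
- by rewrite hp1 mulr0 addr0.
- have : (2:R) <= k.+2%:R by rewrite ler_nat.
  have := h0 k.+2; nra.
Qed.

Theorem lemma1 (R : realType) (n : nat) (p : 'I_n -> nat -> R) :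
  (2 <= n)%N ->
  admissible p ->
  (forall q : 'I_n -> nat -> R, admissible q -> prob_sum_le p <= prob_sum_le q) ->
  forall (i : 'I_n) (j : nat), (n.+1 < j)%N -> p i j = 0.
Proof.
move=> hn hadm hmin i j hj.
have [//|hne] := eqVneq (p i j) 0.
exfalso.
pose v := fun k => if 0 < p k 0%N then 0%N else 1%N.
have hv : forall k, 0 < p k (v k).
  by move=> k; have [? [? ?]] := hadm k; apply: pos01.
have hv1 : forall k, (v k <= 1)%N by move=> k; rewrite /v; case: ifP.
pose m := v i.
have hm1 : (m <= 1)%N := hv1 i.
have hpj : 0 < p i j by rewrite lt_def hne (hadm i).1.
pose A : R := n.+1%:R - m%:R.
pose B : R := j%:R - n.+1%:R.
have hA : 0 < A by rewrite subr_gt0 ltr_nat; lia.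
have hB : 0 < B by rewrite subr_gt0 ltr_nat.
pose t := Num.min (p i m / B) (p i j / A).
have ht : 0 < t by rewrite lt_min !divr_gt0 ?hv.
have [htB htA] : t * B <= p i m /\ t * A <= p i j.
  have := le_refl t; rewrite {2}/t le_min => /andP[h1 h2].
  by split; rewrite -ler_pdivlMr.
pose w := fun x : nat => (x == m)%:R * (- B) + (x == n.+1)%:R * (A + B)
   + (x == j)%:R * (- A).
have hmn : (m == n.+1) = false by apply/negbTE; rewrite neq_ltn; apply/orP; left; lia.
have hmj : (m == j) = false by apply/negbTE; rewrite neq_ltn; apply/orP; left; lia.
have hnj : (n.+1 == j) = false by apply/negbTE; rewrite neq_ltn; apply/orP; left; lia.
have hwm : w m = - B by rewrite /w eqxx hmn hmj !(mul1r, mul0r, addr0).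
have hsw : forall N, (j < N)%N -> \sum_(0 <= k < N) w k = 0.
  move=> N hN; rewrite /w !big_split /= !sum_ind.
  have -> : (m < N)%N by lia.
  have -> : (n.+1 < N)%N by lia.
  rewrite hN /=; rewrite !mul1r; ring.
have hsxw : forall N, (j < N)%N -> \sum_(0 <= k < N) k%:R * w k = 0.
  move=> N hN.
  under eq_bigr => k _ do rewrite /w !mulrDr ![k%:R * ((_ == _)%:R * _)]mulrCA.
  rewrite !big_split /= !sum_ind.
  have -> : (m < N)%N by lia.
  have -> : (n.+1 < N)%N by lia.
  rewrite hN /= !mul1r /A /B; ring.
pose q := fun k x => if k == i then p i x + t * w x else p k x.
have hq : admissible q.
  move=> k; rewrite /q; have [_|hki] := eqVneq k i; last exact: hadm k.
  have [hp0 [hs1 hs2]] := hadm i.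
  split; [|split].
  - move=> x; have [->|hxm] := eqVneq x m.
      by rewrite hwm mulrN subr_ge0.
    have [->|hxn] := eqVneq x n.+1.
      rewrite /w eqxx eq_sym hmn hnj !(mul1r, mul0r, add0r, addr0).
      by apply: addr_ge0 => //; apply: mulr_ge0; [apply: ltW | apply: addr_ge0; apply: ltW].
    have [->|hxj] := eqVneq x j.
      rewrite /w eqxx eq_sym hmj eq_sym hnj !(mul1r, mul0r, add0r, addr0).
      by rewrite mulrN subr_ge0.
    rewrite /w (negbTE hxm) (negbTE hxn) (negbTE hxj) !mul0r !addr0 mulr0 addr0.
    exact: hp0.
  - apply: (cvg_trans (near_eq_cvg _) hs1).
    exists j.+1 => // N /= hN.
    by rewrite /series /= big_split /= -mulr_sumr hsw // mulr0 addr0.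
  - apply: (cvg_trans (near_eq_cvg _) hs2).
    exists j.+1 => // N /= hN.
    rewrite /series /=.
    under [in RHS]eq_bigr => l _ do rewrite mulrDr mulrCA.
    by rewrite big_split /= -mulr_sumr hsxw // mulr0 addr0.
have := hmin q hq; apply/negP; rewrite -ltNge.
rewrite -subr_lt0 /prob_sum_le -sumrB.
have hterm : forall f : {ffun 'I_n -> 'I_n.+1},
    \prod_(k < n) q k (f k) - \prod_(k < n) p k (f k) =
    t * w (f i) * \prod_(k < n | k != i) p k (f k).
  move=> f; rewrite (bigD1 i) //= [in X in _ - X](bigD1 i) //=.
  rewrite /q eqxx (eq_bigr (fun k => p k (f k))); last by move=> k /negbTE ->.
  ring.
pose f0 : {ffun 'I_n -> 'I_n.+1} := [ffun k => inord (v k)].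
have hf0v : forall k, (f0 k : nat) = v k.
  by move=> k; rewrite ffunE inordK //; have := hv1 k; lia.
have hf0 : (\sum_(k < n) f0 k <= n)%N.
  apply: (@leq_trans (\sum_(k < n) 1)%N).
    by apply: leq_sum => k _; rewrite hf0v.
  by rewrite sum_nat_const card_ord muln1.
rewrite (bigD1 f0) //= hterm.
have h1 : t * w (f0 i) * \prod_(k < n | k != i) p k (f0 k) < 0.
  rewrite hf0v -/m hwm mulrN mulNr oppr_lt0; apply: mulr_gt0.
    exact: mulr_gt0.
  by apply: prodr_gt0 => k _; rewrite hf0v.
have h2 : \sum_(f : {ffun 'I_n -> 'I_n.+1} | (\sum_(k < n) f k <= n)%N && (f != f0))
   (\prod_(k < n) q k (f k) - \prod_(k < n) p k (f k)) <= 0.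
  apply: sumr_le0 => f _; rewrite hterm -mulrA; apply: mulr_ge0_le0; first exact: ltW.
  apply: mulr_le0_ge0; last by apply: prodr_ge0 => k _; exact: (hadm k).1.
  have hfi : ((f i : nat) == n.+1) = false by apply/negbTE; rewrite neq_ltn ltn_ord.
  rewrite /w hfi mul0r addr0 !mulrN -opprD oppr_le0.
  by apply: addr_ge0; apply: mulr_ge0 => //; apply: ltW.
lra.
Qed.
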